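(* There is an absolute constant $c>0$ such that for every $n$, every $\epsilon\in(0,1)$ and every symmetric PSD $A\in\mathbb{R}^{n\times n}$ with $\max_{i,j}|A_{ij}|\le 1$, Algorithm E run with $p=\min(1, \frac{c}{\epsilon n})$ returns, with probability at least $3/4$, a unit vector $u\in\mathbb{R}^n$ with $u^TAu \ge \lambda_1(A) - \epsilon n$, where $\lambda_1(A)$ is the largest eigenvalue of $A$.
   Context: Algorithm E: include each column index $i\in[n]$ independently with probability $p$; let $S\in\mathbb{R}^{n\times m}$ be the matrix whose columns are the standard basis vectors $e_i$ of the included indices. Query the columns $AS$ of $A$, and from $AS$ and $S$ compute $S^TAS$ and $S^TA^2S=(AS)^T(AS)$. If $S^TAS = 0$, return an arbitrary unit vector. Otherwise find $x\in\mathbb{R}^m$ with $x^TS^TASx>0$ maximizing $\frac{x^TS^TA^2Sx}{x^TS^TASx}$, and return $u = \frac{ASx}{\|ASx\|_2}$. *)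

(* Defs.v *)
From HB Require Import structures.
From mathcomp Require Import all_boot all_order all_algebra.
From mathcomp Require Import boolp classical_sets reals.
Set Implicit Arguments. Unset Strict Implicit. Unset Printing Implicit Defensive.
Import Order.TTheory GRing.Theory Num.Theory.
Local Open Scope ring_scope.

Definition qf (R : realType) (k : nat) (M : 'M[R]_k) (x : 'cV[R]_k) : R :=
  (x^T *m M *m x) 0 0.

Definition vnorm (R : realType) (k : nat) (v : 'cV[R]_k) : R :=
  Num.sqrt ((v^T *m v) 0 0).

Definition lambda1 (R : realType) (n : nat) (A : 'M[R]_n) : R :=
  sup [set a : R | eigenvalue A a].

(* Sampling matrix S : n x m whose columns are the e_i, i in T (increasing order). *)
Definition sampleMx (R : realType) (n : nat) (T : {set 'I_n}) : 'M[R]_(n, #|T|) :=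
  \matrix_(i < n, j < #|T|) (i == enum_val j)%:R.

(* u is a possible output of Algorithm E on A when the sampled index set is T. *)
Definition algE_output (R : realType) (n : nat) (A : 'M[R]_n)
    (T : {set 'I_n}) (u : 'cV[R]_n) : Prop :=
  let S := sampleMx R T in
  let C := S^T *m A *m S in
  let B := (A *m S)^T *m (A *m S) in
  if C == 0 then vnorm u = 1
  else exists x : 'cV[R]_#|T|,
      [/\ 0 < qf C x,
          (forall y : 'cV[R]_#|T|, 0 < qf C y -> qf B y / qf C y <= qf B x / qf C x)
        & u = (vnorm (A *m S *m x))^-1 *: (A *m S *m x)].

(* probability that the index set drawn (each index independently w.p. p) satisfies P *)
Definition probSample (R : realType) (n : nat) (p : R) (P : {set 'I_n} -> bool) : R :=
  \sum_(T : {set 'I_n} | P T) p ^+ #|T| * (1 - p) ^+ (n - #|T|).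

(* Main.v *)
Require Import Defs.
From HB Require Import structures.
From mathcomp Require Import all_boot all_order all_algebra.
From mathcomp Require Import boolp classical_sets reals.
From mathcomp Require Import ring lra.
Import Order.TTheory GRing.Theory Num.Theory.
Set Implicit Arguments. Unset Strict Implicit.
Local Open Scope ring_scope.

Definition bil (R : realType) (n : nat) (M : 'M[R]_n) (x y : 'cV[R]_n) : R :=
  (x^T *m M *m y) 0 0.

Lemma qfE (R : realType) (n : nat) (M : 'M[R]_n) x : qf M x = bil M x x.
Proof. by []. Qed.

Lemma bil_sym (R : realType) (n : nat) (M : 'M[R]_n) x y :
  M^T = M -> bil M x y = bil M y x.
Proof.
move=> hM; rewrite /bil.
have -> : (x^T *m M *m y) 0 0 = ((x^T *m M *m y)^T) 0 0 by rewrite [RHS]mxE.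
by rewrite !trmx_mul trmxK hM mulmxA.
Qed.

Lemma bilDr (R : realType) (n : nat) (M : 'M[R]_n) x y z :
  bil M x (y + z) = bil M x y + bil M x z.
Proof. by rewrite /bil mulmxDr mxE. Qed.

Lemma bilZr (R : realType) (n : nat) (M : 'M[R]_n) x t y :
  bil M x (t *: y) = t * bil M x y.
Proof. by rewrite /bil -scalemxAr mxE. Qed.

Lemma bilDl (R : realType) (n : nat) (M : 'M[R]_n) x y z :
  bil M (x + y) z = bil M x z + bil M y z.
Proof. by rewrite /bil linearD /= !mulmxDl mxE. Qed.

Lemma bilZl (R : realType) (n : nat) (M : 'M[R]_n) x t y :
  bil M (t *: x) y = t * bil M x y.
Proof. by rewrite /bil linearZ /= -!scalemxAl mxE. Qed.

Lemma qf_shift (R : realType) (n : nat) (M : 'M[R]_n) x y t :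
  M^T = M -> qf M (y + t *: x) = qf M y + 2 * t * bil M x y + t ^+ 2 * qf M x.
Proof.
move=> hM; rewrite !qfE bilDl !bilDr !bilZl !bilZr (bil_sym y x hM).
ring.
Qed.

Lemma CS (R : realType) (n : nat) (M : 'M[R]_n) x y :
  M^T = M -> (forall v, 0 <= qf M v) -> 0 < qf M x ->
  bil M x y ^+ 2 <= qf M x * qf M y.
Proof.
move=> hM hP hx.
have := hP (y + (- bil M x y / qf M x) *: x).
rewrite qf_shift //.
set b := bil M x y; set c := qf M x; set d := qf M y.
have -> : d + 2 * (- b / c) * b + (- b / c) ^+ 2 * c = d - b ^+ 2 / c.
  by field; rewrite gt_eqF.
rewrite subr_ge0 ler_pdivrMr // => h.
by rewrite mulrC.
Qed.
Lemma bil_sum (R : realType) (n : nat) (M : 'M[R]_n) x y :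
  bil M x y = \sum_i \sum_j x i 0 * M i j * y j 0.
Proof.
rewrite /bil mxE exchange_big /=; apply: eq_bigr => j _.
rewrite mxE mulr_suml; apply: eq_bigr => i _.
by rewrite mxE.
Qed.

Lemma dot_sum (R : realType) (n : nat) (x y : 'cV[R]_n) :
  bil 1%:M x y = \sum_i x i 0 * y i 0.
Proof.
rewrite /bil mulmx1 mxE; apply: eq_bigr => i _; by rewrite mxE.
Qed.

Lemma bil_eig (R : realType) (n : nat) (A : 'M[R]_n) a v y :
  A *m v = a *: v -> bil A y v = a * bil 1%:M y v.
Proof. by move=> hv; rewrite /bil -mulmxA hv mulmx1 -scalemxAr mxE. Qed.

Lemma eig_psd (R : realType) (n : nat) (A : 'M[R]_n) a v :
  A^T = A -> (forall w, 0 <= qf A w) -> A *m v = a *: v -> bil 1%:M v v = 1 ->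
  forall x, a * bil 1%:M v x ^+ 2 <= qf A x.
Proof.
move=> hS hP hv h1 x.
set al := bil 1%:M v x.
have hx : x = (x + (- al) *: v) + al *: v by rewrite scaleNr subrK.
have h1s : (1%:M : 'M[R]_n)^T = 1%:M by rewrite trmx1.
rewrite hx qf_shift // (bil_sym _ _ hS) (bil_eig _ hv) (bil_sym _ _ h1s).
rewrite bilDr bilZr h1 (qfE A v) (bil_eig _ hv) h1 -/al.
have := hP (x + - al *: v); rewrite qfE => h.
nra.
Qed.

Lemma eig_diag (R : realType) (n : nat) (A : 'M[R]_n) a v :
  A^T = A -> (forall w, 0 <= qf A w) -> A *m v = a *: v -> bil 1%:M v v = 1 ->
  forall i, a * v i 0 ^+ 2 <= A i i.
Proof.
move=> hS hP hv h1 i.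
have := eig_psd hS hP hv h1 (delta_mx i 0).
have -> : bil 1%:M v (delta_mx i 0) = v i 0.
  by rewrite /bil mulmx1 -colE !mxE.
have -> : qf A (delta_mx i 0) = A i i.
  by rewrite qfE /bil trmx_delta -mulmxA -colE -rowE !mxE.
done.
Qed.
Definition wt (R : realType) (n : nat) (p : R) (T : {set 'I_n}) : R :=
  p ^+ #|T| * (1 - p) ^+ (n - #|T|).

Lemma wt_prod (R : realType) (n : nat) (p : R) (T : {set 'I_n}) :
  wt p T = \prod_i (if i \in T then p else 1 - p).
Proof.
rewrite /wt (bigID (mem T)) /=.
rewrite [X in _ = X * _](eq_bigr (fun _ => p)); last by move=> i iT; rewrite iT.
rewrite [X in _ = _ * X](eq_bigr (fun _ => 1 - p)); last by move=> i iT; rewrite (negbTE iT).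
rewrite !prodr_const; congr (_ * _ ^+ _).
have hc := cardC (mem T); rewrite card_ord in hc.
rewrite -[X in (X - _)%N]hc addKn.
by apply: eq_card => i.
Qed.

Lemma sum_sets (R : realType) (n : nat) (a b : 'I_n -> R) :
  \sum_(T : {set 'I_n}) \prod_i (if i \in T then a i else b i) = \prod_i (a i + b i).
Proof.
have -> : \prod_i (a i + b i) = \prod_i \sum_(j : bool) (if j then a i else b i).
  by apply: eq_bigr => i _; rewrite big_bool.
rewrite bigA_distr_bigA /=.
rewrite (reindex (fun T : {set 'I_n} => [ffun i => i \in T])) /=.
  by apply: eq_bigr => T _; apply: eq_bigr => i _; rewrite ffunE.
exists (fun f : {ffun 'I_n -> bool} => [set i | f i]) => [T _ | f _].
  by apply/setP => i; rewrite inE ffunE.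
by apply/ffunP => i; rewrite ffunE inE.
Qed.

Lemma E_sub (R : realType) (n : nat) (p : R) (U : {set 'I_n}) :
  \sum_(T : {set 'I_n}) wt p T * (U \subset T)%:R = p ^+ #|U|.
Proof.
transitivity (\sum_(T : {set 'I_n})
   \prod_i (if i \in T then p else if i \in U then 0 else 1 - p)).
  apply: eq_bigr => T _; rewrite wt_prod.
  have [sUT|nsUT] := boolP (U \subset T).
    rewrite mulr1; apply: eq_bigr => i _.
    case: ifP => // iT; case: ifP => // iU.
    by move/fintype.subsetP: sUT => /(_ i iU); rewrite iT.
  rewrite mulr0; have [i iU iT] := subsetPn nsUT.
  by rewrite (bigD1 i) //= (negbTE iT) iU mul0r.
rewrite sum_sets.
transitivity (\prod_i (if i \in U then p else 1)).
  by apply: eq_bigr => i _; case: ifP => _; rewrite ?addr0 // addrC subrK.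
by rewrite -big_mkcond prodr_const.
Qed.

Definition ind (R : realType) (n : nat) (i : 'I_n) (T : {set 'I_n}) : R :=
  (i \in T)%:R.

Lemma E0 (R : realType) (n : nat) (p : R) :
  \sum_(T : {set 'I_n}) wt p T = 1.
Proof.
transitivity (p ^+ #|(finset.set0 : {set 'I_n})|); last by rewrite cards0 expr0.
rewrite -E_sub.
by apply: eq_bigr => T _; rewrite finset.sub0set mulr1.
Qed.

Lemma E1 (R : realType) (n : nat) (p : R) (i : 'I_n) :
  \sum_(T : {set 'I_n}) wt p T * ind R i T = p.
Proof.
transitivity (p ^+ #|[set i]|); last by rewrite cards1 expr1.
rewrite -E_sub.
by apply: eq_bigr => T _; rewrite /ind finset.sub1set.
Qed.

Lemma E2 (R : realType) (n : nat) (p : R) (i j : 'I_n) :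
  \sum_(T : {set 'I_n}) wt p T * (ind R i T * ind R j T) =
  if i == j then p else p ^+ 2.
Proof.
transitivity (p ^+ #|[set i; j]|).
  rewrite -E_sub; apply: eq_bigr => T _; rewrite finset.subUset !finset.sub1set /ind.
  by rewrite -natrM mulnb.
by rewrite cards2; case: eqP.
Qed.

Lemma Ed1 (R : realType) (n : nat) (p : R) (g : 'I_n -> R) :
  \sum_(T : {set 'I_n}) wt p T * (\sum_i ind R i T * g i) = p * \sum_i g i.
Proof.
under eq_bigr do rewrite mulr_sumr.
rewrite exchange_big mulr_sumr; apply: eq_bigr => i _.
rewrite -[X in _ = X * _](E1 p i) mulr_suml; apply: eq_bigr => T _; by rewrite mulrA.
Qed.

Lemma Ed2 (R : realType) (n : nat) (p : R) (G : 'I_n -> 'I_n -> R) :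
  \sum_(T : {set 'I_n}) wt p T * (\sum_i \sum_j ind R i T * ind R j T * G i j)
  = p ^+ 2 * \sum_i \sum_j G i j + (p - p ^+ 2) * \sum_i G i i.
Proof.
transitivity (\sum_i \sum_j (if i == j then p else p ^+ 2) * G i j).
  under eq_bigr do rewrite mulr_sumr.
  rewrite exchange_big; apply: eq_bigr => i _.
  under eq_bigr do rewrite mulr_sumr.
  rewrite exchange_big; apply: eq_bigr => j _.
  rewrite -[X in _ = X * _](E2 p i j) mulr_suml; apply: eq_bigr => T _; by rewrite mulrA.
rewrite !mulr_sumr -big_split; apply: eq_bigr => i _ /=.
rewrite (bigD1 i) //= eqxx [X in _ = _ * X + _](bigD1 i) //=.
rewrite (eq_bigr (fun j => p ^+ 2 * G i j)); last first.
  by move=> j /negbTE; rewrite eq_sym => ->.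
rewrite -mulr_sumr; ring.
Qed.

Definition zc (R : realType) (n : nat) (T : {set 'I_n}) (v : 'cV[R]_n) : 'cV[R]_n :=
  \col_i (ind R i T * v i 0).

Lemma S_proj (R : realType) (n : nat) (T : {set 'I_n}) (v : 'cV[R]_n) :
  sampleMx R T *m ((sampleMx R T)^T *m v) = zc T v.
Proof.
apply/matrixP => i k; rewrite ord1 !mxE.
transitivity (\sum_(j < #|T|) (i == enum_val j)%:R * v (enum_val j) 0).
  apply: eq_bigr => j _; rewrite !mxE; congr (_ * _).
  rewrite (bigD1 (enum_val j)) //= !mxE eqxx mul1r big1 ?addr0 //.
  by move=> l /negbTE hl; rewrite !mxE hl mul0r.
rewrite -(big_enum_val (fun x => (i == x)%:R * v x 0)) /= big_mkcond /=.
rewrite (bigD1 i) //= eqxx mul1r big1 ?addr0.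
  by rewrite /ind; case: (i \in T); rewrite ?mul1r ?mul0r.
by move=> l hl; rewrite eq_sym (negbTE hl) mul0r; case: ifP.
Qed.

Lemma dot_ge0 (R : realType) (n : nat) (y : 'cV[R]_n) : 0 <= bil 1%:M y y.
Proof. by rewrite dot_sum; apply: sumr_ge0 => i _; rewrite -expr2 sqr_ge0. Qed.

Lemma dot_eq0 (R : realType) (n : nat) (y : 'cV[R]_n) : bil 1%:M y y = 0 -> y = 0.
Proof.
rewrite dot_sum => h.
move: h; under eq_bigr => i _ do rewrite -expr2; move=> h.
have h0 := psumr_eq0P (fun i _ => sqr_ge0 (y i 0)) h.
apply/matrixP => i k; rewrite ord1 mxE.
have := h0 i isT; move/eqP; rewrite expr2 mulf_eq0 orbb.
by move/eqP.
Qed.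

Lemma qf0 (R : realType) (m : nat) (x : 'cV[R]_m) : qf (0 : 'M[R]_m) x = 0.
Proof. by rewrite /qf mulmx0 mul0mx mxE. Qed.

Lemma out_props (R : realType) (n : nat) (A : 'M[R]_n) (T : {set 'I_n}) u :
  A^T = A -> (forall w, 0 <= qf A w) -> algE_output A T u ->
  vnorm u = 1 /\
  (forall x0, 0 < qf ((sampleMx R T)^T *m A *m sampleMx R T) x0 ->
     qf ((A *m sampleMx R T)^T *m (A *m sampleMx R T)) x0 /
       qf ((sampleMx R T)^T *m A *m sampleMx R T) x0 <= qf A u).
Proof.
move=> hS hP; rewrite /algE_output /=.
set S := sampleMx R T.
have eC : forall y, qf (S^T *m A *m S) y = qf A (S *m y).
  by move=> y; rewrite /qf !trmx_mul !mulmxA.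
have eB : forall y, qf ((A *m S)^T *m (A *m S)) y = bil 1%:M (A *m S *m y) (A *m S *m y).
  by move=> y; rewrite /qf /bil mulmx1 !trmx_mul !mulmxA.
case: eqP => [C0 hu | Cn].
  by split=> // x0; rewrite C0 qf0 ltxx.
move=> [x [hpos hmax ->]].
set w := A *m S *m x.
set z := S *m x.
have wz : w = A *m z by rewrite /w /z mulmxA.
have qz : qf A z = bil 1%:M z w.
  by rewrite wz qfE /bil mulmx1 mulmxA.
have qzpos : 0 < qf A z by rewrite -eC.
have wwpos : 0 < bil 1%:M w w.
  rewrite lt_def dot_ge0 andbT; apply/eqP => /dot_eq0 h0.
  by move: qzpos; rewrite qz h0 /bil mulmx0 mxE ltxx.
set ww := bil 1%:M w w in wwpos *.
have vw : vnorm w = Num.sqrt ww by rewrite /vnorm /ww /bil mulmx1.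
rewrite vw.
set k := (Num.sqrt ww)^-1.
have sq : Num.sqrt ww ^+ 2 = ww by rewrite sqr_sqrtr // ltW.
have spos : 0 < Num.sqrt ww by rewrite sqrtr_gt0.
have uu : bil 1%:M (k *: w) (k *: w) = 1.
  rewrite bilZl bilZr -/ww /k mulrA -expr2 exprVn sq mulVf //.
  by rewrite gt_eqF.
split.
  have -> : vnorm (k *: w) = Num.sqrt (bil 1%:M (k *: w) (k *: w)).
    by rewrite /vnorm /bil mulmx1.
  by rewrite uu sqrtr1.
move=> x0 hx0.
have hq : qf A (k *: w) = qf A w / ww.
  rewrite !qfE bilZl bilZr mulrA -expr2 /k exprVn sq mulrC //.
rewrite hq.
apply: (le_trans (hmax x0 hx0)).
rewrite eB -/w -/ww eC -/z.
have cs := CS w hS hP qzpos.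
have ezw : bil A z w = ww.
  by rewrite /ww /bil mulmx1 wz (trmx_mul A z) hS !mulmxA.
rewrite ezw in cs.
rewrite ler_pdivrMr // mulrAC ler_pdivlMr // -expr2 mulrC.
by [].
Qed.

Lemma Esum3 (R : realType) (n : nat) (p c : R) (X Y : {set 'I_n} -> R) :
  \sum_(T : {set 'I_n}) wt p T * (X T + Y T + c) =
  \sum_(T : {set 'I_n}) wt p T * X T + \sum_(T : {set 'I_n}) wt p T * Y T +
  c * \sum_(T : {set 'I_n}) wt p T.
Proof.
rewrite mulr_sumr -!big_split; apply: eq_bigr => T _ /=; ring.
Qed.

Lemma wt_ge0 (R : realType) (n : nat) (p : R) (T : {set 'I_n}) :
  0 <= p <= 1 -> 0 <= wt p T.
Proof.
move=> /andP [h0 h1]; rewrite /wt mulr_ge0 // exprn_ge0 //.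
by rewrite subr_ge0.
Qed.

Lemma probSampleE (R : realType) (n : nat) (p : R) (P : {set 'I_n} -> bool) :
  probSample p P = \sum_(T : {set 'I_n}) wt p T * (P T)%:R.
Proof.
rewrite /probSample big_mkcond; apply: eq_bigr => T _.
by case: (P T); rewrite ?mulr1 ?mulr0.
Qed.

Lemma q_eq (R : realType) (n : nat) (T : {set 'I_n}) (v : 'cV[R]_n) :
  bil 1%:M v (zc T v) = \sum_i ind R i T * v i 0 ^+ 2.
Proof. rewrite dot_sum; apply: eq_bigr => i _; rewrite mxE; ring. Qed.

Lemma qf_z (R : realType) (n : nat) (A : 'M[R]_n) (T : {set 'I_n}) (v : 'cV[R]_n) :
  qf A (zc T v) = \sum_i \sum_j ind R i T * ind R j T * (v i 0 * A i j * v j 0).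
Proof.
rewrite qfE bil_sum; apply: eq_bigr => i _; apply: eq_bigr => j _.
rewrite !mxE; ring.
Qed.

Lemma sq_sum (R : realType) (n : nat) (T : {set 'I_n}) (g : 'I_n -> R) :
  (\sum_i ind R i T * g i) ^+ 2 =
  \sum_i \sum_j ind R i T * ind R j T * (g i * g j).
Proof.
rewrite expr2 mulr_suml; apply: eq_bigr => i _.
rewrite mulr_sumr; apply: eq_bigr => j _; ring.
Qed.

Lemma sum_sq (R : realType) (n : nat) (g : 'I_n -> R) :
  \sum_i \sum_j (g i * g j) = (\sum_i g i) ^+ 2.
Proof.
rewrite expr2 mulr_suml; apply: eq_bigr => i _; by rewrite mulr_sumr.
Qed.

Lemma main_eig (R : realType) (n : nat) (A : 'M[R]_n) (a e p L : R)
  (v : 'cV[R]_n) (u : {set 'I_n} -> 'cV[R]_n) :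
  A^T = A -> (forall w, 0 <= qf A w) -> (forall i j, `|A i j| <= 1) ->
  A *m v = a *: v -> bil 1%:M v v = 1 ->
  0 < e -> e / 2 < a -> L - e <= a - e / 2 ->
  0 < p -> p <= 1 -> 64 * (1 - p) <= p * e ->
  (forall T, algE_output A T (u T)) ->
  3 / 4 <= probSample p
     (fun T => `[< vnorm (u T) = 1 /\ L - e <= qf A (u T) >]).
Proof.
move=> hS hP hB hv h1 he hae hL hp0 hp1 hpe hu.
set q := fun T => \sum_i ind R i T * v i 0 ^+ 2.
set W := fun T => qf A (zc T v) - a * q T ^+ 2.
have apos : 0 < a by apply: lt_trans hae; rewrite divr_gt0.
have hAii : forall i, A i i <= 1 := fun i => le_trans (ler_norm _) (hB i i).
have hdiag := eig_diag hS hP hv h1.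
have Wge0 : forall T, 0 <= W T.
  move=> T; rewrite /W subr_ge0 /q -q_eq.
  exact: eig_psd hS hP hv h1 (zc T v).
have sv : \sum_i v i 0 ^+ 2 = 1.
  by rewrite -h1 dot_sum; apply: eq_bigr => i _; rewrite expr2.
have pt : forall T, 1 - 4 * (q T - p) ^+ 2 / p ^+ 2 - 8 * W T / (e * p ^+ 2)
    <= (`[< vnorm (u T) = 1 /\ L - e <= qf A (u T) >])%:R.
  move=> T.
  have X0 : 0 <= 4 * (q T - p) ^+ 2 / p ^+ 2.
    apply: divr_ge0; [apply: mulr_ge0; [lra| exact: sqr_ge0] | apply: exprn_ge0; lra].
  have Y0 : 0 <= 8 * W T / (e * p ^+ 2).
    apply: divr_ge0; [apply: mulr_ge0; [lra| exact: Wge0] | apply: mulr_ge0; [lra | apply: exprn_ge0; lra]].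
  case: asboolP => [_|hn]; first by rewrite /=; lra.
  rewrite /= leNgt; apply/negP => hlt; apply: hn.
  have hX : 4 * (q T - p) ^+ 2 / p ^+ 2 < 1 by lra.
  have hY : 8 * W T / (e * p ^+ 2) < 1 by lra.
  have p2 : 0 < p ^+ 2 by rewrite exprn_gt0.
  have ep2 : 0 < e * p ^+ 2 by rewrite mulr_gt0.
  rewrite ltr_pdivrMr // mul1r in hX.
  rewrite ltr_pdivrMr // mul1r in hY.
  have hq : p / 2 < q T by nra.
  have hpq : 0 <= 4 * q T ^+ 2 - p ^+ 2 by nra.
  have hepq := mulr_ge0 (ltW he) hpq.
  have hq2 : W T <= e * q T ^+ 2 / 2 by nra.
  set z := zc T v.
  have qz : qf A z = a * q T ^+ 2 + W T by rewrite /W subrKC.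
  have qzpos : 0 < qf A z.
    rewrite qz; apply: ltr_wpDr; first exact: Wge0.
    by rewrite mulr_gt0 // exprn_gt0 //; nra.
  have [hn1 hmax] := out_props hS hP (hu T).
  split => //.
  set S := sampleMx R T.
  set x0 := S^T *m v.
  have eC : qf (S^T *m A *m S) x0 = qf A (S *m x0) by rewrite /qf !trmx_mul !mulmxA.
  have eB : qf ((A *m S)^T *m (A *m S)) x0 = bil 1%:M (A *m (S *m x0)) (A *m (S *m x0)).
    by rewrite /qf /bil mulmx1 !trmx_mul !mulmxA.
  have Sx0 : S *m x0 = z by rewrite /x0 /S S_proj.
  rewrite Sx0 in eC eB.
  have := hmax x0; rewrite eC eB => /(_ qzpos) hr.
  apply: le_trans hL _; apply: le_trans hr.
  have h1s : (1%:M : 'M[R]_n)^T = 1%:M by rewrite trmx1.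
  have hP1 : forall w : 'cV[R]_n, 0 <= qf 1%:M w by move=> w; rewrite qfE dot_ge0.
  have hv1 : 0 < qf 1%:M v by rewrite qfE h1 ltr01.
  have cs := CS (A *m z) h1s hP1 hv1.
  rewrite (qfE 1%:M v) h1 mul1r (qfE 1%:M (A *m z)) in cs.
  have evz : bil 1%:M v (A *m z) = a * q T.
    have -> : bil 1%:M v (A *m z) = bil A v z by rewrite /bil mulmx1 mulmxA.
    by rewrite (bil_sym _ _ hS) (bil_eig _ hv) (bil_sym _ _ h1s) q_eq.
  rewrite evz in cs.
  apply: (@le_trans _ _ ((a * q T) ^+ 2 / qf A z)).
    rewrite ler_pdivlMr // qz.
    have ha : 0 <= a - e / 2 by lra.
    have hw : 0 <= e * q T ^+ 2 / 2 - W T by lra.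
    have := mulr_ge0 ha hw.
    have := sqr_ge0 (q T).
    nra.
  by rewrite ler_pdivrMr // divfK ?gt_eqF.
rewrite probSampleE.
have wge : forall T : {set 'I_n}, 0 <= wt p T.
  by move=> T; apply: wt_ge0; rewrite (ltW hp0) hp1.
apply: le_trans (ler_sum _ (fun T _ => ler_wpM2l (wge T) (pt T))).
have -> : \sum_(T : {set 'I_n}) wt p T *
    (1 - 4 * (q T - p) ^+ 2 / p ^+ 2 - 8 * W T / (e * p ^+ 2)) =
  \sum_(T : {set 'I_n}) wt p T
  - 4 / p ^+ 2 * \sum_(T : {set 'I_n}) wt p T * (q T - p) ^+ 2
  - 8 / (e * p ^+ 2) * \sum_(T : {set 'I_n}) wt p T * W T.
  rewrite !mulr_sumr -!sumrB; apply: eq_bigr => T _; ring.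
rewrite E0.
have hX : forall T, (q T - p) ^+ 2 =
   \sum_i \sum_j ind R i T * ind R j T * (v i 0 ^+ 2 * v j 0 ^+ 2)
   + \sum_i ind R i T * (- (2 * p) * v i 0 ^+ 2) + p ^+ 2.
  move=> T; rewrite -sq_sum.
  have -> : \sum_i ind R i T * (- (2 * p) * v i 0 ^+ 2) = - (2 * p) * q T.
    by rewrite /q mulr_sumr; apply: eq_bigr => i _; ring.
  rewrite /q; ring.
under eq_bigr do rewrite hX.
rewrite Esum3 Ed1 Ed2 E0 sum_sq sv -mulr_sumr sv.
have hW : forall T, W T =
   \sum_i \sum_j ind R i T * ind R j T * (v i 0 * A i j * v j 0 - a * (v i 0 ^+ 2 * v j 0 ^+ 2)).
  move=> T; rewrite /W qf_z /q sq_sum mulr_sumr -sumrB; apply: eq_bigr => i _.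
  rewrite mulr_sumr -sumrB; apply: eq_bigr => j _; ring.
under [X in _ <= _ - _ * X]eq_bigr do rewrite hW.
rewrite Ed2.
have hG : \sum_i \sum_j (v i 0 * A i j * v j 0 - a * (v i 0 ^+ 2 * v j 0 ^+ 2)) = 0.
  have -> : \sum_i \sum_j (v i 0 * A i j * v j 0 - a * (v i 0 ^+ 2 * v j 0 ^+ 2)) =
     bil A v v - a * \sum_i \sum_j (v i 0 ^+ 2 * v j 0 ^+ 2).
    rewrite bil_sum mulr_sumr -sumrB; apply: eq_bigr => i _.
    by rewrite mulr_sumr -sumrB.
  by rewrite sum_sq sv (bil_eig _ hv) h1 expr1n subrr.
rewrite hG mulr0 add0r.
set s4 := \sum_i (v i 0 ^+ 2 * v i 0 ^+ 2).
set t := \sum_i (v i 0 * A i i * v i 0 - a * (v i 0 ^+ 2 * v i 0 ^+ 2)).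
have s4ge : 0 <= s4 by apply: sumr_ge0 => i _; rewrite mulr_ge0 ?sqr_ge0.
have as4 : a * s4 <= 1.
  rewrite -sv /s4 mulr_sumr; apply: ler_sum => i _.
  have := hdiag i; have := hAii i; have := sqr_ge0 (v i 0); nra.
have tle : t <= 1.
  rewrite -sv /t; apply: ler_sum => i _.
  have := hAii i; have := sqr_ge0 (v i 0); have := mulr_ge0 (ltW apos) (mulr_ge0 (sqr_ge0 (v i 0)) (sqr_ge0 (v i 0))).
  nra.
have pn0 : p != 0 by rewrite gt_eqF.
have en0 : e != 0 by rewrite gt_eqF.
set r := (1 - p) / p.
have e1 : 4 / p ^+ 2 * (p ^+ 2 * 1 ^+ 2 + (p - p ^+ 2) * s4 + p * (- (2 * p) * 1) + p ^+ 2 * 1)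
   = 4 * (r * s4) by rewrite /r; field.
have e2 : 8 / (e * p ^+ 2) * ((p - p ^+ 2) * t) = 8 * (r * e^-1 * t) by rewrite /r; field; rewrite en0 pn0.
rewrite e1 e2.
have r0 : 0 <= r by rewrite /r divr_ge0 ?subr_ge0 // ltW.
have hr : 64 * r <= e by rewrite /r mulrA ler_pdivrMr // [e * p]mulrC.
have s4e : s4 * e <= 2 by nra.
set ie := e^-1.
have ie0 : 0 <= ie by rewrite /ie invr_ge0 ltW.
have eie : e * ie = 1 by rewrite /ie mulfV.
have hrs : r * s4 = r * ie * (s4 * e).
  by rewrite mulrA -[r * ie * s4]mulrA [ie * s4]mulrC !mulrA -mulrA [ie * e]mulrC eie mulr1.
have ha := mulr_ge0 (mulr_ge0 r0 ie0) (_ : 0 <= 2 - s4 * e).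
have hb := mulr_ge0 (mulr_ge0 r0 ie0) (_ : 0 <= 1 - t).
have hc := mulr_ge0 ie0 (_ : 0 <= e - 64 * r).
rewrite hrs.
have hrie : r * ie <= 1 / 64.
  have := hc (ltac:(lra)); nra.
have := ha (ltac:(lra)); have := hb (ltac:(lra)); nra.
Qed.

Lemma eig_vec (R : realType) (n : nat) (A : 'M[R]_n) (a : R) :
  A^T = A -> eigenvalue A a -> exists v : 'cV[R]_n, A *m v = a *: v /\ bil 1%:M v v = 1.
Proof.
move=> hS /eigenvalueP [r hr rn0].
set c := r^T.
have hc : A *m c = a *: c.
  by rewrite /c -{1}hS -trmx_mul hr linearZ.
have cn0 : c != 0.
  apply/eqP => h; move: rn0; rewrite -(trmxK r) -/c h.
  by rewrite linear0 eqxx.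
set s := bil 1%:M c c.
have spos : 0 < s.
  rewrite lt_def dot_ge0 andbT; apply/eqP => /dot_eq0 h.
  by move: cn0; rewrite h eqxx.
have sq : Num.sqrt s ^+ 2 = s by rewrite sqr_sqrtr // ltW.
have sqpos : 0 < Num.sqrt s by rewrite sqrtr_gt0.
exists ((Num.sqrt s)^-1 *: c); split.
  by rewrite -scalemxAr hc !scalerA mulrC.
rewrite bilZl bilZr -/s mulrA -expr2 exprVn sq mulVf //.
by rewrite gt_eqF.
Qed.

Lemma eig_le_n (R : realType) (n : nat) (A : 'M[R]_n) (a : R) :
  A^T = A -> (forall w, 0 <= qf A w) -> (forall i j, `|A i j| <= 1) ->
  eigenvalue A a -> a <= n%:R.
Proof.
move=> hS hP hB /(eig_vec hS) [v [hv h1]].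
have sv : \sum_i v i 0 ^+ 2 = 1.
  by rewrite -h1 dot_sum; apply: eq_bigr => i _; rewrite expr2.
have -> : n%:R = \sum_(i < n) (1 : R) by rewrite sumr_const card_ord.
rewrite -[a]mulr1 -[X in a * X]sv mulr_sumr.
apply: ler_sum => i _.
exact: le_trans (eig_diag hS hP hv h1 i) (le_trans (ler_norm _) (hB i i)).
Qed.

Unset Implicit Arguments.

Theorem mainTheorem4 (R : realType) :
  exists c : R, 0 < c /\
  forall (n : nat) (eps : R) (A : 'M[R]_n),
    (0 < n)%N -> 0 < eps < 1 ->
    A^T = A ->
    (forall v : 'cV[R]_n, 0 <= qf A v) ->
    (forall i j, `|A i j| <= 1) ->
    let p := Num.min 1 (c / (eps * n%:R)) in
    forall u : {set 'I_n} -> 'cV[R]_n,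
      (forall T, algE_output A T (u T)) ->
      3 / 4 <= probSample p
                 (fun T => `[< vnorm (u T) = 1 /\ qf A (u T) >= lambda1 A - eps * n%:R >]).
Proof.
exists 64; split; first by [].
move=> n eps A hn /andP [he0 he1] hS hP hB p u hu.
set e := eps * n%:R.
have epos : 0 < e by rewrite /e mulr_gt0 // ltr0n.
have [hp0 hp1 hpe] : [/\ 0 < p, p <= 1 & 64 * (1 - p) <= p * e].
  rewrite /p; case: (leP 1 (64 / e)) => h.
    split => //; lra.
  split; first by rewrite divr_gt0.
    exact: ltW.
  rewrite divfK ?gt_eqF //.
  have : 0 < 64 / e by rewrite divr_gt0.
  lra.
have [hl|hl] := leP (lambda1 A) e.
  rewrite probSampleE.
  have -> : \sum_(T : {set 'I_n}) wt p T *
      (`[< vnorm (u T) = 1 /\ lambda1 A - e <= qf A (u T) >])%:R =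
      \sum_(T : {set 'I_n}) wt p T.
    apply: eq_bigr => T _.
    have [hn1 _] := out_props hS hP (hu T).
    rewrite asboolT ?mulr1 //; split => //.
    apply: le_trans (hP (u T)); lra.
  rewrite E0; lra.
have hex : exists a, eigenvalue A a.
  apply: contrapT => hno.
  move: hl; rewrite /lambda1.
  have -> : [set a : R | eigenvalue A a]%classic = set0.
    by apply/seteqP; split => x //= hx; apply: hno; exists x.
  rewrite sup0; lra.
have hsup : has_sup [set a : R | eigenvalue A a]%classic.
  split; first by case: hex => a ha; exists a.
  exists n%:R => a /= ha; exact: eig_le_n hS hP hB ha.
have he2 : 0 < e / 2 by rewrite divr_gt0.
have [a /= ha hla] := sup_adherent he2 hsup.
have [v [hv h1]] := eig_vec hS ha.
apply: (main_eig hS hP hB hv h1 epos) => //.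
- move: hl hla; rewrite /lambda1; lra.
- move: hl hla; rewrite /lambda1; lra.
Qed.
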